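(* Let $\mathcal H_3=\mathbb{R}^3$ with coordinates $(x,y,z)$ and metric $g=dx^2+dy^2+(dz-x\,dy)^2$ (the Heisenberg group), and let $\pi:\mathcal H_3\to\mathbb{R}^2$, $\pi(x,y,z)=(x,y)$ (a Riemannian submersion onto the Euclidean plane with minimal fibres). Let $\gamma:I\to\mathbb{R}^2$ be a curve parametrised by arc length with signed curvature $k$. Then the cylinder $S=\pi^{-1}(\gamma(I))\subset\mathcal H_3$ is a biminimal surface with respect to $\lambda$ if and only if $\gamma$ is a biminimal curve with respect to $\lambda+1$ in $\mathbb{R}^2$, i.e. $k''=k^3+(1+\lambda)k$.
   Context: For a map $\phi$: tension field $\tau(\phi)=\operatorname{trace}\nabla d\phi$, bitension field $\tau_2(\phi)=\sum_i(\nabla^\phi_{e_i}\nabla^\phi_{e_i}-\nabla^\phi_{\nabla_{e_i}e_i})\tau(\phi)+\sum_iR^N(d\phi(e_i),\tau(\phi))d\phi(e_i)$, with $R(X,Y)Z=\nabla_{[X,Y]}Z-\nabla_X\nabla_YZ+\nabla_Y\nabla_XZ$. An immersion is biminimal with respect to $\lambda\in\mathbb{R}$ if $[\tau_2(\phi)]^\perp-\lambda[\tau(\phi)]^\perp=0$ ($\perp$ = normal component). For an arc-length plane curve with signed curvature $k$, biminimality with respect to $\mu$ means $k''-k^3-\mu k=0$. *)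

(* Defs.v *)
From Stdlib Require Import Reals.
From Coquelicot Require Import Coquelicot.
Open Scope R_scope.

(* points of R^n are represented as functions nat -> R (coordinates 0..n-1) *)
Definition pt := nat -> R.

Fixpoint sm (k : nat) (f : nat -> R) : R :=
  match k with O => 0 | S k' => sm k' f + f k' end.

Definition upd (p : pt) (a : nat) (r : R) : pt :=
  fun i => if Nat.eqb i a then r else p i.

Definition pd (F : pt -> R) (a : nat) (p : pt) : R :=
  Derive (fun r => F (upd p a r)) (p a).

Definition det2 (M : nat -> nat -> R) : R := M 0%nat 0%nat * M 1%nat 1%nat - M 0%nat 1%nat * M 1%nat 0%nat.
Definition inv2 (M : nat -> nat -> R) (i j : nat) : R :=
  (match i, j with
   | O, O => M 1%nat 1%nat
   | O, _ => - M 0%nat 1%nat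
   | _, O => - M 1%nat 0%nat
   | _, _ => M 0%nat 0%nat end) / det2 M.
Definition cof3 (M : nat -> nat -> R) (i j : nat) : R :=
  let i1 := ((i + 1) mod 3)%nat in let i2 := ((i + 2) mod 3)%nat in
  let j1 := ((j + 1) mod 3)%nat in let j2 := ((j + 2) mod 3)%nat in
  M i1 j1 * M i2 j2 - M i1 j2 * M i2 j1.
Definition det3 (M : nat -> nat -> R) : R := sm 3 (fun j => M 0%nat j * cof3 M 0%nat j).
Definition inv3 (M : nat -> nat -> R) (i j : nat) : R := cof3 M j i / det3 M.

(* A Riemannian metric on R^3: g p a b *)
Definition metric3 := pt -> nat -> nat -> R.

Definition Gam (g : metric3) (p : pt) (c a b : nat) : R :=
  / 2 * sm 3 (fun d => inv3 (g p) c d *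
     (pd (fun q => g q d a) b p + pd (fun q => g q d b) a p - pd (fun q => g q a b) d p)).

(* usual curvature components Rm^d_{abc}, with
   Rusual(d_a,d_b)d_c = nabla_a nabla_b d_c - nabla_b nabla_a d_c = Rm^d_{abc} d_d *)
Definition Rm (g : metric3) (p : pt) (d a b c : nat) : R :=
  pd (fun q => Gam g q d b c) a p - pd (fun q => Gam g q d a c) b p
  + sm 3 (fun e => Gam g p d a e * Gam g p e b c - Gam g p d b e * Gam g p e a c).

(* the paper's curvature  R(X,Y)Z = nabla_[X,Y] Z - nabla_X nabla_Y Z + nabla_Y nabla_X Z
   (component d), at the point p *)
Definition RN (g : metric3) (p : pt) (X Y Z : pt) (d : nat) : R :=
  - sm 3 (fun a => sm 3 (fun b => sm 3 (fun c => Rm g p d a b c * X a * Y b * Z c))).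

Section Immersion.
Variables (g : metric3) (phi : pt -> pt).

Definition dphi (u : pt) (i c : nat) : R := pd (fun v => phi v c) i u.

Definition hind (u : pt) (i j : nat) : R :=
  sm 3 (fun a => sm 3 (fun b => g (phi u) a b * dphi u i a * dphi u j b)).

Definition hinv (u : pt) (i j : nat) : R := inv2 (hind u) i j.

Definition Gt (u : pt) (k i j : nat) : R :=
  / 2 * sm 2 (fun l => hinv u k l *
     (pd (fun v => hind v l i) j u + pd (fun v => hind v l j) i u - pd (fun v => hind v i j) l u)).

Definition nab (V : pt -> pt) (i : nat) (u : pt) (c : nat) : R :=
  pd (fun v => V v c) i u
  + sm 3 (fun a => sm 3 (fun b => Gam g (phi u) c a b * dphi u i a * V u b)).

Definition tau (u : pt) (c : nat) : R :=
  sm 2 (fun i => sm 2 (fun j => hinv u i j *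
     (nab (fun v c' => dphi v j c') i u c - sm 2 (fun k => Gt u k i j * dphi u k c)))).

Definition roughlap (V : pt -> pt) (u : pt) (c : nat) : R :=
  sm 2 (fun i => sm 2 (fun j => hinv u i j *
     (nab (fun v c' => nab V j v c') i u c - sm 2 (fun k => Gt u k i j * nab V k u c)))).

Definition tau2 (u : pt) (c : nat) : R :=
  roughlap tau u c
  + sm 2 (fun i => sm 2 (fun j => hinv u i j *
       RN g (phi u) (fun a => dphi u i a) (tau u) (fun a => dphi u j a) c)).

Definition normal (u : pt) (W : pt) (c : nat) : R :=
  W c - sm 2 (fun i => sm 2 (fun j => hinv u i j *
          sm 3 (fun a => sm 3 (fun b => g (phi u) a b * W a * dphi u i b)) * dphi u j c)).

Definition biminimal (D : pt -> Prop) (lambda : R) : Prop :=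
  forall u, D u -> forall c, (c < 3)%nat ->
    normal u (tau2 u) c - lambda * normal u (tau u) c = 0.

End Immersion.

(* The Heisenberg metric  dx^2 + dy^2 + (dz - x dy)^2  on R^3 = {(x,y,z)} *)
Definition heis (p : pt) (a b : nat) : R :=
  match a, b with
  | O, O => 1
  | 1%nat, 1%nat => 1 + p 0%nat ^ 2
  | 1%nat, 2%nat => - p 0%nat
  | 2%nat, 1%nat => - p 0%nat
  | 2%nat, 2%nat => 1
  | _, _ => 0
  end.

(* The cylinder pi^{-1}(gamma(I)) parametrized by (s,t) |-> (gx s, gy s, t) *)
Definition cyl (gx gy : R -> R) (u : pt) : pt :=
  fun c => match c with O => gx (u 0%nat) | 1%nat => gy (u 0%nat) | _ => u 1%nat end.

Definition curv (gx gy : R -> R) (s : R) : R :=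
  Derive gx s * Derive_n gy 2 s - Derive_n gx 2 s * Derive gy s.

Definition in_I (a b : Rbar) (s : R) : Prop := Rbar_lt a s /\ Rbar_lt s b.

(* Main.v *)
Require Import Defs.
From Stdlib Require Import Reals Lra Lia Nsatz.
From Coquelicot Require Import Coquelicot.
Open Scope R_scope.

Lemma sm_ext k f g : (forall i, (i < k)%nat -> f i = g i) -> sm k f = sm k g.
Proof.
  induction k; simpl; intros H; [reflexivity|].
  rewrite IHk by (intros; apply H; lia). rewrite H by lia. reflexivity.
Qed.

Lemma pd_ext F G a p : (forall q, F q = G q) -> pd F a p = pd G a p.
Proof. intros H; unfold pd; apply Derive_ext; intros; apply H. Qed.

Lemma pd_fun0 (f : R -> R) a p :
  pd (fun q => f (q 0%nat)) a p = match a with O => Derive f (p 0%nat) | _ => 0 end.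
Proof.
  unfold pd, upd. destruct a as [|a]; simpl.
  - reflexivity.
  - apply Derive_const.
Qed.

Section Curve.
Variables (a b : Rbar) (gx gy : R -> R).
Hypothesis Hsm : forall n s, in_I a b s -> ex_derive_n gx n s /\ ex_derive_n gy n s.
Hypothesis Harc : forall s, in_I a b s -> Derive gx s ^ 2 + Derive gy s ^ 2 = 1.

Lemma loc_I s : in_I a b s -> locally s (fun t => in_I a b t).
Proof. intros [H1 H2]; apply locally_interval with a b; auto. split; auto. Qed.

Lemma pd_loc (F : pt -> R) (f : R -> R) i p :
  (forall v, in_I a b (v 0%nat) -> F v = f (v 0%nat)) -> in_I a b (p 0%nat) ->
  pd F i p = match i with O => Derive f (p 0%nat) | _ => 0 end.
Proof.
  intros HF Hp. unfold pd, upd. destruct i as [|i]; simpl.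
  - apply Derive_ext_loc. apply (filter_imp (fun t => in_I a b t)); [|apply loc_I; auto].
    intros t Ht. rewrite HF; simpl; auto.
  - rewrite <- (Derive_const (f (p 0%nat)) (p (S i))). apply Derive_ext.
    intros t. rewrite HF; simpl; auto.
Qed.
End Curve.

Definition hf (x : R) (a b : nat) : R :=
  match a, b with
  | O, O => 1
  | 1%nat, 1%nat => 1 + x ^ 2
  | 1%nat, 2%nat => - x
  | 2%nat, 1%nat => - x
  | 2%nat, 2%nat => 1
  | _, _ => 0
  end.
Definition dhf (x : R) (a b : nat) : R :=
  match a, b with
  | 1%nat, 1%nat => 2 * x
  | 1%nat, 2%nat => -1
  | 2%nat, 1%nat => -1
  | _, _ => 0
  end.
Definition hiF (x : R) (a b : nat) : R :=
  match a, b with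
  | O, O => 1
  | 1%nat, 1%nat => 1
  | 1%nat, 2%nat => x
  | 2%nat, 1%nat => x
  | 2%nat, 2%nat => 1 + x ^ 2
  | _, _ => 0
  end.
Definition GF (x : R) (c a b : nat) : R :=
  match c, a, b with
  | O, 1%nat, 1%nat => - x
  | O, 1%nat, 2%nat => / 2
  | O, 2%nat, 1%nat => / 2
  | 1%nat, O, 1%nat => x / 2
  | 1%nat, 1%nat, O => x / 2
  | 1%nat, O, 2%nat => - / 2
  | 1%nat, 2%nat, O => - / 2
  | 2%nat, O, 1%nat => (x ^ 2 - 1) / 2
  | 2%nat, 1%nat, O => (x ^ 2 - 1) / 2
  | 2%nat, O, 2%nat => - x / 2
  | 2%nat, 2%nat, O => - x / 2
  | _, _, _ => 0
  end.
Definition dGF (x : R) (c a b : nat) : R :=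
  match c, a, b with
  | O, 1%nat, 1%nat => - 1
  | 1%nat, O, 1%nat => / 2
  | 1%nat, 1%nat, O => / 2
  | 2%nat, O, 1%nat => x
  | 2%nat, 1%nat, O => x
  | 2%nat, O, 2%nat => - / 2
  | 2%nat, 2%nat, O => - / 2
  | _, _, _ => 0
  end.

Lemma pd_heis d a b p :
  pd (fun q => heis q d a) b p = match b with O => dhf (p 0%nat) d a | _ => 0 end.
Proof.
  change (pd (fun q => (fun x => hf x d a) (q 0%nat)) b p = match b with O => dhf (p 0%nat) d a | _ => 0 end).
  rewrite pd_fun0. destruct b; [|reflexivity].
  apply is_derive_unique.
  destruct d as [|[|[|d]]]; destruct a as [|[|[|a]]]; simpl; auto_derive; auto; ring.
Qed.

Lemma det3_heis p : det3 (heis p) = 1.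
Proof. unfold det3, cof3; simpl; ring. Qed.

Lemma inv3_heis p c d : (c < 3)%nat -> (d < 3)%nat -> inv3 (heis p) c d = hiF (p 0%nat) c d.
Proof.
  intros Hc Hd. unfold inv3. rewrite det3_heis.
  destruct c as [|[|[|c]]]; try lia; destruct d as [|[|[|d]]]; try lia;
  unfold cof3; simpl; field.
Qed.

Lemma Gam_heis p c a b : (c < 3)%nat -> (a < 3)%nat -> (b < 3)%nat ->
  Gam heis p c a b = GF (p 0%nat) c a b.
Proof.
  intros Hc Ha Hb. unfold Gam. cbn [sm].
  rewrite !pd_heis. rewrite !inv3_heis by lia.
  destruct c as [|[|[|c]]]; try lia; destruct a as [|[|[|a]]]; try lia;
  destruct b as [|[|[|b]]]; try lia; simpl; field.
Qed.

Lemma pd_Gam c a b e p : (c < 3)%nat -> (a < 3)%nat -> (b < 3)%nat ->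
  pd (fun q => Gam heis q c a b) e p = match e with O => dGF (p 0%nat) c a b | _ => 0 end.
Proof.
  intros Hc Ha Hb.
  rewrite (pd_ext _ (fun q => (fun x => GF x c a b) (q 0%nat))) by (intros; apply Gam_heis; auto).
  rewrite (pd_fun0 (fun x => GF x c a b)). destruct e; [|reflexivity].
  apply is_derive_unique.
  destruct c as [|[|[|c]]]; try lia; destruct a as [|[|[|a]]]; try lia;
  destruct b as [|[|[|b]]]; try lia; simpl; auto_derive; auto; field.
Qed.

Definition RF (x : R) (d a b c : nat) : R :=
  (match a with O => dGF x d b c | _ => 0 end) - (match b with O => dGF x d a c | _ => 0 end)
  + sm 3 (fun e => GF x d a e * GF x e b c - GF x d b e * GF x e a c).

Lemma Rm_heis p d a b c : (d < 3)%nat -> (a < 3)%nat -> (b < 3)%nat -> (c < 3)%nat ->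
  Rm heis p d a b c = RF (p 0%nat) d a b c.
Proof.
  intros Hd Ha Hb Hc. unfold Rm, RF.
  rewrite !pd_Gam by auto. f_equal. apply sm_ext. intros e He.
  rewrite !Gam_heis by lia. reflexivity.
Qed.

Definition Cc (f : R -> R) (s : R) := Derive f s.
Definition D2 (f : R -> R) (s : R) := Derive_n f 2 s.
Definition D3 (f : R -> R) (s : R) := Derive_n f 3 s.

Section Curve.
Variables (a b : Rbar) (gx gy : R -> R).
Hypothesis Hsm : forall n s, in_I a b s -> ex_derive_n gx n s /\ ex_derive_n gy n s.
Hypothesis Harc : forall s, in_I a b s -> Derive gx s ^ 2 + Derive gy s ^ 2 = 1.


Definition Kk s := curv gx gy s.
Definition K1 s := Derive Kk s.
Definition K2 s := Derive K1 s.

Lemma exX s : in_I a b s -> ex_derive (fun x => gx x) s.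
Proof. intros H. exact (proj1 (Hsm 1 s H)). Qed.
Lemma exY s : in_I a b s -> ex_derive (fun x => gy x) s.
Proof. intros H. exact (proj2 (Hsm 1 s H)). Qed.
Lemma exC s : in_I a b s -> ex_derive (fun x => Cc gx x) s.
Proof. intros H. exact (proj1 (Hsm 2 s H)). Qed.
Lemma exS s : in_I a b s -> ex_derive (fun x => Cc gy x) s.
Proof. intros H. exact (proj2 (Hsm 2 s H)). Qed.
Lemma exC2 s : in_I a b s -> ex_derive (fun x => D2 gx x) s.
Proof. intros H. exact (proj1 (Hsm 3 s H)). Qed.
Lemma exS2 s : in_I a b s -> ex_derive (fun x => D2 gy x) s.
Proof. intros H. exact (proj2 (Hsm 3 s H)). Qed.
Lemma exC3 s : in_I a b s -> ex_derive (fun x => D3 gx x) s.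
Proof. intros H. exact (proj1 (Hsm 4 s H)). Qed.
Lemma exS3 s : in_I a b s -> ex_derive (fun x => D3 gy x) s.
Proof. intros H. exact (proj2 (Hsm 4 s H)). Qed.

Lemma DX s : Derive (fun x => gx x) s = Cc gx s.
Proof. reflexivity. Qed.

Lemma arc_d s : in_I a b s ->
  Cc gx s * Derive (fun x => Cc gx x) s + Cc gy s * Derive (fun x => Cc gy x) s = 0.
Proof.
  intros H.
  assert (E : 0 = 2 * (Cc gx s * Derive (fun x => Cc gx x) s + Cc gy s * Derive (fun x => Cc gy x) s)).
  { rewrite <- (Derive_const 1 s).
    apply eq_trans with (Derive (fun x => Cc gx x ^ 2 + Cc gy x ^ 2) s).
    - apply Derive_ext_loc.
      apply (filter_imp (fun t => in_I a b t)); [|apply loc_I; auto].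
      intros t Ht. symmetry. apply Harc; auto.
    - apply is_derive_unique. auto_derive. repeat split; [apply exC|apply exS]; auto. ring. }
  lra.
Qed.

Lemma Kk_eq s : Kk s = Cc gx s * Derive (fun x => Cc gy x) s - Derive (fun x => Cc gx x) s * Cc gy s.
Proof. reflexivity. Qed.

Lemma DC s : in_I a b s -> Derive (fun x => Cc gx x) s = - Kk s * Cc gy s.
Proof.
  intros H. pose proof (arc_d s H) as E. pose proof (Harc s H) as A. rewrite Kk_eq.
  unfold Cc in *. set (c := Derive gx s) in *. set (sg := Derive gy s) in *.
  set (c' := Derive (fun x => Derive gx x) s) in *. set (s' := Derive (fun x => Derive gy x) s) in *.
  simpl in A. rewrite !Rmult_1_r in A. nsatz.
Qed.

Lemma DS s : in_I a b s -> Derive (fun x => Cc gy x) s = Kk s * Cc gx s.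
Proof.
  intros H. pose proof (arc_d s H) as E. pose proof (Harc s H) as A. rewrite Kk_eq.
  unfold Cc in *. set (c := Derive gx s) in *. set (sg := Derive gy s) in *.
  set (c' := Derive (fun x => Derive gx x) s) in *. set (s' := Derive (fun x => Derive gy x) s) in *.
  simpl in A. rewrite !Rmult_1_r in A. nsatz.
Qed.

Lemma Kk_fun : forall t, Kk t = Cc gx t * D2 gy t - D2 gx t * Cc gy t.
Proof. reflexivity. Qed.

Lemma dK_is s : in_I a b s -> is_derive Kk s
  (D2 gx s * D2 gy s + Cc gx s * D3 gy s - (D3 gx s * Cc gy s + D2 gx s * D2 gy s)).
Proof.
  intros H. apply is_derive_ext with (fun t => Cc gx t * D2 gy t - D2 gx t * Cc gy t).
  { intros; reflexivity. }
  auto_derive.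
  - repeat split; auto using exC, exS, exC2, exS2.
  - change (Derive (fun x => Cc gx x) s) with (D2 gx s).
    change (Derive (fun x => Cc gy x) s) with (D2 gy s).
    change (Derive (fun x => D2 gx x) s) with (D3 gx s).
    change (Derive (fun x => D2 gy x) s) with (D3 gy s). ring.
Qed.

Lemma exK s : in_I a b s -> ex_derive (fun x => Kk x) s.
Proof. intros H. eexists. apply dK_is; auto. Qed.

Lemma exK1 s : in_I a b s -> ex_derive (fun x => K1 x) s.
Proof.
  intros H.
  apply ex_derive_ext_loc with
    (fun t => D2 gx t * D2 gy t + Cc gx t * D3 gy t - (D3 gx t * Cc gy t + D2 gx t * D2 gy t)).
  { apply (filter_imp (fun t => in_I a b t)); [|apply loc_I; auto].
    intros t Ht. symmetry. apply is_derive_unique. apply dK_is; auto. }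
  auto_derive. repeat split; auto using exC, exS, exC2, exS2, exC3, exS3.
Qed.

Lemma DK s : Derive (fun x => Kk x) s = K1 s.
Proof. reflexivity. Qed.
Lemma DK1 s : Derive (fun x => K1 x) s = K2 s.
Proof. reflexivity. Qed.


Notation phi := (cyl gx gy).
Definition DP (s : R) (i c : nat) : R :=
  match i, c with
  | O, O => Cc gx s
  | O, 1%nat => Cc gy s
  | 1%nat, O => 0
  | 1%nat, 1%nat => 0
  | 1%nat, _ => 1
  | _, _ => 0
  end.

Lemma dphi_eq u i c : dphi phi u i c = DP (u 0%nat) i c.
Proof.
  unfold dphi, pd, cyl, upd.
  destruct i as [|[|i]]; destruct c as [|[|c]]; simpl;
    first [reflexivity | apply Derive_const | apply Derive_id].
Qed.

Lemma nab_eq V i u c : (c < 3)%nat ->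
  nab heis phi V i u c = pd (fun v => V v c) i u +
    sm 3 (fun a => sm 3 (fun b => GF (gx (u 0%nat)) c a b * DP (u 0%nat) i a * V u b)).
Proof.
  intros Hc. unfold nab. f_equal. apply sm_ext; intros a0 Ha. apply sm_ext; intros b0 Hb.
  rewrite Gam_heis by auto. rewrite dphi_eq. reflexivity.
Qed.

Definition HH (s : R) (i j : nat) : R :=
  match i, j with
  | O, O => Cc gx s ^ 2 + (1 + gx s ^ 2) * Cc gy s ^ 2
  | 1%nat, 1%nat => 1
  | _, _ => - (gx s * Cc gy s)
  end.

Lemma hind_eq u i j : (i < 2)%nat -> (j < 2)%nat -> hind heis phi u i j = HH (u 0%nat) i j.
Proof.
  intros Hi Hj. unfold hind. cbn [sm]. rewrite !dphi_eq.
  destruct i as [|[|i]]; try lia; destruct j as [|[|j]]; try lia; simpl; ring.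
Qed.

Definition HI (s : R) (i j : nat) : R :=
  match i, j with
  | O, O => 1
  | 1%nat, 1%nat => 1 + gx s ^ 2 * Cc gy s ^ 2
  | _, _ => gx s * Cc gy s
  end.

Lemma hinv_eq u i j : in_I a b (u 0%nat) -> (i < 2)%nat -> (j < 2)%nat ->
  hinv heis phi u i j = HI (u 0%nat) i j.
Proof.
  intros Hu Hi Hj. pose proof (Harc _ Hu) as A.
  assert (Hd : det2 (hind heis phi u) = 1).
  { unfold det2. rewrite !hind_eq by lia. unfold HH, Cc. simpl in *. nra. }
  unfold hinv, inv2. rewrite Hd.
  destruct i as [|[|i]]; try lia; destruct j as [|[|j]]; try lia;
  cbv beta iota; rewrite hind_eq by lia; unfold HH, HI, Cc; unfold Rdiv; rewrite Rinv_1; nra.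
Qed.


Ltac exd := repeat split; auto using exX, exY, exC, exS, exK, exK1.
Ltac dsimp H := rewrite ?(DC _ H), ?(DS _ H), ?Derive_const;
  repeat match goal with
  | |- context [Derive (fun x => gx x) ?t] => change (Derive (fun x => gx x) t) with (Cc gx t)
  | |- context [Derive (fun x => Kk x) ?t] => change (Derive (fun x => Kk x) t) with (K1 t)
  | |- context [Derive (fun x => K1 x) ?t] => change (Derive (fun x => K1 x) t) with (K2 t)
  end.

Definition HD (s : R) (i j : nat) : R :=
  match i, j with
  | O, O => 2 * (gx s * Cc gy s) * (Cc gx s * Cc gy s + gx s * Kk s * Cc gx s)
  | 1%nat, 1%nat => 0
  | _, _ => - (Cc gx s * Cc gy s + gx s * Kk s * Cc gx s)
  end.

Lemma pd_hind u l i j : in_I a b (u 0%nat) -> (l < 2)%nat -> (i < 2)%nat ->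
  pd (fun v => hind heis phi v l i) j u = match j with O => HD (u 0%nat) l i | _ => 0 end.
Proof.
  intros Hu Hl Hi.
  rewrite (pd_ext _ (fun q => (fun s => HH s l i) (q 0%nat))) by (intros; apply hind_eq; auto).
  rewrite (pd_fun0 (fun s => HH s l i)). destruct j; [|reflexivity].
  apply is_derive_unique. set (s := u 0%nat) in *.
  destruct l as [|[|l]]; try lia; destruct i as [|[|i]]; try lia; simpl;
  auto_derive; try exd; dsimp Hu; unfold HD; simpl; ring.
Qed.

Definition GtF (s : R) (k i j : nat) : R :=
  match k, i, j with
  | 1%nat, O, O => - (Cc gx s * Cc gy s + gx s * Kk s * Cc gx s)
  | _, _, _ => 0
  end.

Lemma Gt_eq u k i j : in_I a b (u 0%nat) -> (k < 2)%nat -> (i < 2)%nat -> (j < 2)%nat ->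
  Gt heis phi u k i j = GtF (u 0%nat) k i j.
Proof.
  intros Hu Hk Hi Hj. unfold Gt. cbn [sm].
  rewrite !hinv_eq by (auto; lia). rewrite !pd_hind by (auto; lia).
  destruct k as [|[|k]]; try lia; destruct i as [|[|i]]; try lia; destruct j as [|[|j]]; try lia;
  unfold GtF, HD, HI; simpl; field.
Qed.


Lemma pd_dphi u j c i :
  pd (fun v => dphi phi v j c) i u = match i with O => Derive (fun s => DP s j c) (u 0%nat) | _ => 0 end.
Proof.
  rewrite (pd_ext _ (fun q => (fun s => DP s j c) (q 0%nat))) by (intros; apply dphi_eq).
  apply (pd_fun0 (fun s => DP s j c)).
Qed.

Definition TF (s : R) (c : nat) : R :=
  match c with
  | O => - (Kk s * Cc gy s)
  | 1%nat => Kk s * Cc gx s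
  | _ => gx s * Kk s * Cc gx s
  end.

Lemma tau_eq u c : in_I a b (u 0%nat) -> (c < 3)%nat -> tau heis phi u c = TF (u 0%nat) c.
Proof.
  intros Hu Hc. unfold tau. cbn [sm].
  rewrite !hinv_eq by (auto; lia). rewrite !Gt_eq by (auto; lia).
  rewrite !nab_eq by auto. rewrite !pd_dphi. cbn [sm]. rewrite !dphi_eq.
  set (s := u 0%nat) in *.
  destruct c as [|[|[|c]]]; try lia; simpl; dsimp Hu; rewrite ?Derive_const; unfold TF, GtF, HI; simpl; field.
Qed.


Definition TD (s : R) (c : nat) : R :=
  match c with
  | O => - (K1 s * Cc gy s + Kk s * (Kk s * Cc gx s))
  | 1%nat => K1 s * Cc gx s + Kk s * (- (Kk s * Cc gy s))
  | _ => Cc gx s * Kk s * Cc gx s + gx s * K1 s * Cc gx s + gx s * Kk s * (- (Kk s * Cc gy s))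
  end.

Lemma Derive_TF s c : in_I a b s -> (c < 3)%nat -> Derive (fun t => TF t c) s = TD s c.
Proof.
  intros Hs Hc. apply is_derive_unique.
  destruct c as [|[|[|c]]]; try lia; simpl; auto_derive; try exd; dsimp Hs; unfold TD; ring.
Qed.

Lemma pd_tau u c i : in_I a b (u 0%nat) -> (c < 3)%nat ->
  pd (fun v => tau heis phi v c) i u = match i with O => TD (u 0%nat) c | _ => 0 end.
Proof.
  intros Hu Hc. rewrite (pd_loc a b _ (fun s => TF s c)); auto.
  - destruct i; auto. apply Derive_TF; auto.
  - intros v Hv. apply tau_eq; auto.
Qed.

Definition NF (s : R) (j c : nat) : R :=
  (match j with O => TD s c | _ => 0 end) +
  sm 3 (fun a0 => sm 3 (fun b0 => GF (gx s) c a0 b0 * DP s j a0 * TF s b0)).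

Lemma nabtau_eq u j c : in_I a b (u 0%nat) -> (c < 3)%nat ->
  nab heis phi (tau heis phi) j u c = NF (u 0%nat) j c.
Proof.
  intros Hu Hc. rewrite nab_eq by auto. rewrite pd_tau by auto. unfold NF. f_equal.
  apply sm_ext; intros a0 Ha. apply sm_ext; intros b0 Hb. rewrite tau_eq by auto. reflexivity.
Qed.

Definition NDF (s : R) (j c : nat) : R := Derive (fun t => NF t j c) s.

Lemma pd_nabtau u j c i : in_I a b (u 0%nat) -> (c < 3)%nat ->
  pd (fun v => nab heis phi (tau heis phi) j v c) i u =
  match i with O => NDF (u 0%nat) j c | _ => 0 end.
Proof.
  intros Hu Hc. rewrite (pd_loc a b _ (fun s => NF s j c)); auto.
  intros v Hv. apply nabtau_eq; auto.
Qed.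

Definition RLF (s : R) (c : nat) : R :=
  sm 2 (fun i => sm 2 (fun j => HI s i j *
    ((match i with O => NDF s j c | _ => 0 end) +
     sm 3 (fun a0 => sm 3 (fun b0 => GF (gx s) c a0 b0 * DP s i a0 * NF s j b0))
     - sm 2 (fun k => GtF s k i j * NF s k c)))).

Lemma rough_eq u c : in_I a b (u 0%nat) -> (c < 3)%nat ->
  roughlap heis phi (tau heis phi) u c = RLF (u 0%nat) c.
Proof.
  intros Hu Hc. unfold roughlap, RLF.
  apply sm_ext; intros i Hi. apply sm_ext; intros j Hj.
  rewrite hinv_eq by auto. f_equal.
  rewrite nab_eq by auto. rewrite pd_nabtau by auto. f_equal.
  - f_equal. apply sm_ext; intros a0 Ha. apply sm_ext; intros b0 Hb.
    rewrite nabtau_eq by auto. reflexivity.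
  - apply sm_ext; intros k Hk. rewrite Gt_eq, nabtau_eq by auto. reflexivity.
Qed.

Definition RNF (s : R) (X Y Z : nat -> R) (d : nat) : R :=
  - sm 3 (fun a0 => sm 3 (fun b0 => sm 3 (fun c0 => RF (gx s) d a0 b0 c0 * X a0 * Y b0 * Z c0))).

Definition T2F (s : R) (c : nat) : R :=
  RLF s c + sm 2 (fun i => sm 2 (fun j => HI s i j * RNF s (DP s i) (TF s) (DP s j) c)).

Lemma tau2_eq u c : in_I a b (u 0%nat) -> (c < 3)%nat ->
  tau2 heis phi u c = T2F (u 0%nat) c.
Proof.
  intros Hu Hc. unfold tau2, T2F. rewrite rough_eq by auto. f_equal.
  apply sm_ext; intros i Hi. apply sm_ext; intros j Hj.
  rewrite hinv_eq by auto. f_equal. unfold RN, RNF. f_equal.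
  apply sm_ext; intros a0 Ha. apply sm_ext; intros b0 Hb. apply sm_ext; intros c0 Hc0.
  rewrite Rm_heis by auto. rewrite !dphi_eq, tau_eq by auto. reflexivity.
Qed.

Definition NrF (s : R) (W : nat -> R) (c : nat) : R :=
  W c - sm 2 (fun i => sm 2 (fun j => HI s i j *
          sm 3 (fun a0 => sm 3 (fun b0 => hf (gx s) a0 b0 * W a0 * DP s i b0)) * DP s j c)).

Lemma normal_eq u W c : in_I a b (u 0%nat) ->
  normal heis phi u W c = NrF (u 0%nat) W c.
Proof.
  intros Hu. unfold normal, NrF. f_equal.
  apply sm_ext; intros i Hi. apply sm_ext; intros j Hj.
  rewrite hinv_eq, !dphi_eq by auto. f_equal. f_equal.
  apply sm_ext; intros a0 Ha. apply sm_ext; intros b0 Hb. rewrite dphi_eq. reflexivity.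
Qed.


Definition nuF (s : R) (c : nat) : R :=
  match c with O => - Cc gy s | 1%nat => Cc gx s | _ => gx s * Cc gx s end.


Definition NFe (s : R) (j c : nat) : R :=
  let x := gx s in let c0 := Cc gx s in let sg := Cc gy s in let k := Kk s in let k1 := K1 s in
  match j, c with
  | O, O => - k1 * sg - k ^ 2 * c0 - x * k * c0 * sg / 2
  | O, 1%nat => k1 * c0 - k ^ 2 * sg - x * k * sg ^ 2 / 2
  | O, _ => k * c0 ^ 2 + x * k1 * c0 - x * k ^ 2 * sg + (x ^ 2 - 1) * k * (c0 ^ 2 - sg ^ 2) / 2
            - x ^ 2 * k * c0 ^ 2 / 2
  | _, O => k * c0 / 2
  | _, 1%nat => k * sg / 2
  | _, _ => x * k * sg / 2
  end.

Lemma NF_eq s j c : (j < 2)%nat -> (c < 3)%nat -> NF s j c = NFe s j c.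
Proof.
  intros Hj Hc. unfold NF, NFe.
  destruct j as [|[|j]]; try lia; destruct c as [|[|[|c]]]; try lia; cbn [sm];
  unfold GF, DP, TF, TD; cbv beta iota; field.
Qed.

Definition NDe (s : R) (j c : nat) : R :=
  let x := gx s in let c0 := Cc gx s in let sg := Cc gy s in let k := Kk s in let k1 := K1 s in
  let k2 := K2 s in
  match j, c with
  | O, O => - k2 * sg - 3 * k * k1 * c0 + k ^ 3 * sg
            - (k * c0 ^ 2 * sg + x * k1 * c0 * sg - x * k ^ 2 * sg ^ 2 + x * k ^ 2 * c0 ^ 2) / 2
  | O, 1%nat => k2 * c0 - 3 * k * k1 * sg - k ^ 3 * c0
            - (k * c0 * sg ^ 2 + x * k1 * sg ^ 2 + 2 * x * k ^ 2 * c0 * sg) / 2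
  | O, _ => (k1 * c0 ^ 2 - 2 * k ^ 2 * c0 * sg) + (k1 * c0 ^ 2 + x * k2 * c0 - x * k * k1 * sg)
            - (k ^ 2 * c0 * sg + 2 * x * k * k1 * sg + x * k ^ 3 * c0)
            + (2 * x * k * c0 * (c0 ^ 2 - sg ^ 2) + (x ^ 2 - 1) * k1 * (c0 ^ 2 - sg ^ 2)
               - 4 * (x ^ 2 - 1) * k ^ 2 * c0 * sg) / 2
            - (2 * x * k * c0 ^ 3 + x ^ 2 * k1 * c0 ^ 2 - 2 * x ^ 2 * k ^ 2 * c0 * sg) / 2
  | _, O => (k1 * c0 - k ^ 2 * sg) / 2
  | _, 1%nat => (k1 * sg + k ^ 2 * c0) / 2
  | _, _ => (c0 * sg * k + x * k1 * sg + x * k ^ 2 * c0) / 2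
  end.

Lemma NDF_eq s j c : in_I a b s -> (j < 2)%nat -> (c < 3)%nat -> NDF s j c = NDe s j c.
Proof.
  intros Hs Hj Hc. unfold NDF.
  rewrite (Derive_ext _ (fun t => NFe t j c)) by (intros; apply NF_eq; auto).
  apply is_derive_unique. unfold NFe, NDe.
  destruct j as [|[|j]]; try lia; destruct c as [|[|[|c]]]; try lia; cbv zeta;
  auto_derive; try exd; dsimp Hs; field.
Qed.


Definition RLX (s : R) (c : nat) : R :=
  sm 2 (fun i => sm 2 (fun j => HI s i j *
    ((match i with O => NDe s j c | _ => 0 end) +
     sm 3 (fun a0 => sm 3 (fun b0 => GF (gx s) c a0 b0 * DP s i a0 * NFe s j b0))
     - sm 2 (fun k => GtF s k i j * NFe s k c)))).

Lemma RLF_eq s c : in_I a b s -> (c < 3)%nat -> RLF s c = RLX s c.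
Proof.
  intros Hs Hc. unfold RLF, RLX.
  apply sm_ext; intros i Hi. apply sm_ext; intros j Hj. f_equal. f_equal. f_equal.
  - destruct i; auto. apply NDF_eq; auto.
  - apply sm_ext; intros a0 Ha. apply sm_ext; intros b0 Hb. rewrite NF_eq; auto.
  - apply sm_ext; intros k Hk. rewrite NF_eq; auto.
Qed.

Definition RNS (s : R) (c : nat) : R :=
  sm 2 (fun i => sm 2 (fun j => HI s i j * RNF s (DP s i) (TF s) (DP s j) c)).

Lemma NrF_ext s W1 W2 c : (c < 3)%nat -> (forall a0, (a0 < 3)%nat -> W1 a0 = W2 a0) ->
  NrF s W1 c = NrF s W2 c.
Proof.
  intros Hc H. unfold NrF. rewrite H by auto. f_equal.
  apply sm_ext; intros i Hi. apply sm_ext; intros j Hj. f_equal. f_equal.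
  apply sm_ext; intros a0 Ha. apply sm_ext; intros b0 Hb. rewrite H; auto.
Qed.


Ltac go s := cbn [sm];
  unfold HI, DP, TF, GF, dGF, NDe, NFe, GtF, nuF, hf; cbv beta iota zeta;
  set (x := gx s) in *; set (c := Cc gx s) in *; set (sg := Cc gy s) in *; set (k := Kk s) in *;
  set (k1 := K1 s) in *; set (k2 := K2 s) in *.
Ltac fin := apply Rminus_diag_uniq; field_simplify; unfold Rdiv; apply Rmult_eq_0_compat_r; simpl;
  repeat match goal with v := _ |- _ => clearbody v end; clear Harc Hsm;
  repeat match goal with H : (_ < _)%nat |- _ => clear H end; nsatz.

Definition RNe (s : R) (c : nat) : R :=
  match c with
  | O => Kk s * Cc gy s / 2
  | 1%nat => - (Kk s * Cc gx s / 2)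
  | _ => - (gx s * Kk s * Cc gx s / 2)
  end.

Lemma RNS_eq s c : Cc gx s ^ 2 + Cc gy s ^ 2 = 1 -> (c < 3)%nat -> RNS s c = RNe s c.
Proof.
  intros A Hc. unfold RNS, RNF, RF, RNe.
  destruct c as [|[|[|c]]]; try lia; go s; simpl in A; rewrite !Rmult_1_r in A.
  all: fin.
Qed.

Definition RLe (s : R) (c : nat) : R :=
  let x := gx s in let c0 := Cc gx s in let sg := Cc gy s in let k := Kk s in let k1 := K1 s in
  let k2 := K2 s in
  match c with
  | O => - k2 * sg + k ^ 3 * sg + k * sg / 2 - 3 * k * k1 * c0
  | 1%nat => k2 * c0 - k ^ 3 * c0 - k * c0 / 2 - 3 * k * k1 * sg
  | _ => k1 - 3 * x * k * k1 * sg - x * k ^ 3 * c0 - x * k * c0 / 2 + x * c0 * k2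
  end.

Lemma RLX_eq s c : Cc gx s ^ 2 + Cc gy s ^ 2 = 1 -> (c < 3)%nat -> RLX s c = RLe s c.
Proof.
  intros A Hc. unfold RLX, RLe.
  destruct c as [|[|[|c]]]; try lia; go s; simpl in A; rewrite !Rmult_1_r in A; fin.
Qed.

Lemma alg s c lam : Cc gx s ^ 2 + Cc gy s ^ 2 = 1 -> (c < 3)%nat ->
  NrF s (fun a0 => RLe s a0 + RNe s a0) c - lam * NrF s (TF s) c =
  (K2 s - Kk s ^ 3 - (1 + lam) * Kk s) * nuF s c.
Proof.
  intros A Hc. unfold NrF, RLe, RNe.
  destruct c as [|[|[|c]]]; try lia; go s; simpl in A; rewrite !Rmult_1_r in A; fin.
Qed.

Lemma key u c lam : in_I a b (u 0%nat) -> (c < 3)%nat ->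
  normal heis phi u (tau2 heis phi u) c - lam * normal heis phi u (tau heis phi u) c =
  (K2 (u 0%nat) - Kk (u 0%nat) ^ 3 - (1 + lam) * Kk (u 0%nat)) * nuF (u 0%nat) c.
Proof.
  intros Hu Hc. pose proof (Harc _ Hu) as A. change (Derive gx) with (Cc gx) in A.
  change (Derive gy) with (Cc gy) in A.
  rewrite !normal_eq by auto.
  rewrite (NrF_ext _ (tau2 heis phi u) (fun a0 => RLe (u 0%nat) a0 + RNe (u 0%nat) a0)) by
    (auto; intros a0 Ha; rewrite tau2_eq by auto; unfold T2F;
     change (sm 2 (fun i => sm 2 (fun j => HI (u 0%nat) i j *
        RNF (u 0%nat) (DP (u 0%nat) i) (TF (u 0%nat)) (DP (u 0%nat) j) a0))) with (RNS (u 0%nat) a0);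
     rewrite RLF_eq, RLX_eq, RNS_eq by auto; reflexivity).
  rewrite (NrF_ext _ (tau heis phi u) (TF (u 0%nat))) by (auto; intros a0 Ha; apply tau_eq; auto).
  apply alg; auto.
Qed.

Lemma main_sec lam :
  biminimal heis phi (fun u => in_I a b (u 0%nat)) lam <->
  forall s, in_I a b s -> K2 s = Kk s ^ 3 + (1 + lam) * Kk s.
Proof.
  split.
  - intros H s Hs.
    set (u := fun i : nat => match i with O => s | _ => 0 end).
    assert (Hu : in_I a b (u 0%nat)) by exact Hs.
    pose proof (H u Hu 0%nat ltac:(lia)) as E0. pose proof (H u Hu 1%nat ltac:(lia)) as E1.
    rewrite key in E0, E1 by (auto; lia). unfold nuF in E0, E1.
    change (u 0%nat) with s in E0, E1.
    pose proof (Harc _ Hs) as A. change (Derive gx) with (Cc gx) in A.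
    change (Derive gy) with (Cc gy) in A.
    set (E := K2 s - Kk s ^ 3 - (1 + lam) * Kk s) in *.
    assert (HE : E = Cc gx s * (E * Cc gx s) + (- Cc gy s) * (E * - Cc gy s)).
    { transitivity (E * (Cc gx s ^ 2 + Cc gy s ^ 2)); [rewrite A; ring | ring]. }
    rewrite E0, E1 in HE. unfold E in HE. lra.
  - intros H u Hu c Hc. rewrite key by auto. rewrite H by auto. ring.
Qed.

End Curve.

Theorem proposition5p2 (a b : Rbar) (gx gy : R -> R) (lambda : R) :
  Rbar_lt a b ->
  (* gamma = (gx, gy) is smooth on the open interval I = (a,b) *)
  (forall n s, in_I a b s -> ex_derive_n gx n s /\ ex_derive_n gy n s) ->
  (* parametrized by arc length *)
  (forall s, in_I a b s -> Derive gx s ^ 2 + Derive gy s ^ 2 = 1) ->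
  (biminimal heis (cyl gx gy) (fun u => in_I a b (u 0%nat)) lambda <->
   forall s, in_I a b s ->
     Derive_n (curv gx gy) 2 s = curv gx gy s ^ 3 + (1 + lambda) * curv gx gy s).
Proof.
  intros Hab Hsm Harc. rewrite (main_sec a b gx gy Hsm Harc lambda).
  split; intros H s Hs; exact (H s Hs).
Qed.
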